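(* Let $\mathbb I$ be an index coding problem which admits a valid scalar linear index code of length $3$ over a finite field $\mathbb F$. Then for every type-2 alignment set of $\mathbb I$ with message set ${\cal W}'$, the restricted problem ${\mathbb I}_{{\cal W}'}$ admits a valid scalar linear index code of length $2$ over $\mathbb F$, and there are no ${\cal W}'$-restricted internal conflicts.
   Context: Index coding setup: An index coding problem $\mathbb I$ over a finite field $\mathbb F$ consists of a set of messages ${\cal W}=\{W_1,\dots,W_n\}$ (each message is a symbol of $\mathbb F$ in the scalar setting), a set of receivers $[1:T]$, and for each receiver $j$ a demand set $D(j)\subseteq{\cal W}$ and a side-information set $S(j)\subseteq {\cal W}\setminus D(j)$. Every message is demanded by at least one receiver. For a receiver $j$ and $W_k\in D(j)$, the interfering set is $Interf_k(j)={\cal W}\setminus(\{W_k\}\cup S(j))$; if $W_k\notin D(j)$ then $Interf_k(j)=\emptyset$. A scalar linear index code of length $L$ over $\mathbb F$ is an assignment of vectors $V_1,\dots,V_n\in\mathbb F^L$ to the messages; the source broadcasts $\sum_{i=1}^n V_iW_i\in\mathbb F^L$, and the code is valid if every receiver $j$ can recover every message of $D(j)$ from the broadcast codeword and the messages in $S(j)$. Two distinct messages $W_i,W_k$ are in conflict if there is a receiver $j$ with $W_k\in D(j)$ and $W_i\in Interf_k(j)$, or a receiver $j$ with $W_i\in D(j)$ and $W_k\in Interf_i(j)$. Alignment graph: the graph with vertex set ${\cal W}$ in which distinct $W_a,W_b$ are adjacent if there exist a receiver $j$ and a message $W_k\in D(j)$ with $W_k\notin\{W_a,W_b\}$ and $W_a,W_b\notin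 S(j)$. An alignment set is the vertex set of a connected component of the alignment graph. An internal conflict is a conflict between two messages lying in the same alignment set. A triangular interfering set is a subset ${\cal W}''\subseteq{\cal W}$ with $|{\cal W}''|=3$ such that there exist a receiver $j$ and a message $W_k\in D(j)\setminus{\cal W}''$ with ${\cal W}''\subseteq Interf_k(j)$, and at least two messages of ${\cal W}''$ are in conflict. Two distinct triangular interfering sets ${\cal W}_1,{\cal W}_2$ are adjacent if ${\cal W}_1\cap{\cal W}_2=\{W_a,W_b\}$ with $W_a,W_b$ in conflict. Two triangular interfering sets are connected if there is a finite sequence of triangular interfering sets starting at one and ending at the other in which consecutive sets are adjacent (every set is connected to itself). A type-2 alignment set is a maximal collection of pairwise connected triangular interfering sets (an equivalence class under connectedness); its message set is the union of its triangular interfering sets. Restricted problem: for ${\cal W}'\subseteq{\cal W}$, the ${\cal W}'$-restricted index coding problem ${\mathbb I}_{{\cal W}'}$ has message set ${\cal W}'$, receivers the receivers $j$ of $\mathbb I$ with $D(j)\cap{\cal W}'\neq\emptyset$, and for each such $j$ demand set $D(j)\cap{\cal W}'$ and side-information set $S(j)\cap{\cal W}'$. The ${\cal W}'$-restricted alignment sets and internal conflicts are the alignment sets and internal conflicts of ${\mathbb I}_{{\cal W}'}$ (conflicts being computed in ${\mathbb I}_{{\cal W}'}$). *)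

(* Defs.v *)
From HB Require Import structures.
From mathcomp Require Import all_boot all_order all_algebra all_field.
Set Implicit Arguments. Unset Strict Implicit. Unset Printing Implicit Defensive.
Import GRing.Theory.
Local Open Scope ring_scope.

(* An index coding problem with messages 'I_n and receivers 'I_T is given by
   demand sets D and side-information sets S.  All notions below are defined
   for the problem restricted to a message set W : {set 'I_n}; the original
   problem is the case W = setT.  (Receivers j with D j :&: W = set0 play no
   role in any of the definitions, so restricting the receiver set is implicit.) *)

Section IndexCoding.
Variables (n T : nat) (D S : 'I_T -> {set 'I_n}) (W : {set 'I_n}).

Definition interf (j : 'I_T) (k : 'I_n) : {set 'I_n} :=
  if k \in D j :&: W then W :\: (k |: (S j :&: W)) else set0.

(* scalar linear code of length L: vectors V i, codeword \sum_(i in W) w_i V_i;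
   valid iff each receiver j can recover each demanded W_k, i.e. the value of
   W_k is determined by the codeword together with the side information. *)
Definition valid_code (F : fieldType) (L : nat) (V : 'I_n -> 'rV[F]_L) : Prop :=
  forall (j : 'I_T) (k : 'I_n), k \in D j :&: W ->
  forall w w' : 'I_n -> F,
    (forall i, i \in S j :&: W -> w i = w' i) ->
    \sum_(i in W) w i *: V i = \sum_(i in W) w' i *: V i ->
    w k = w' k.

Definition conflict (a b : 'I_n) : bool :=
  (a != b) &&
  [exists j : 'I_T,
     ((b \in D j :&: W) && (a \in interf j b)) ||
     ((a \in D j :&: W) && (b \in interf j a))].

Definition align_adj : rel 'I_n := fun a b =>
  [&& a \in W, b \in W, a != b &
   [exists j : 'I_T, exists k : 'I_n,
      [&& k \in D j :&: W, k != a, k != b, a \notin S j & b \notin S j]]].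

Definition same_align_set (a b : 'I_n) : bool :=
  [&& a \in W, b \in W & connect align_adj a b].

Definition has_internal_conflict : Prop :=
  exists a b, conflict a b /\ same_align_set a b.

(* type-2 notions (used for the original problem, W = setT) *)
Definition triangular (X : {set 'I_n}) : bool :=
  [&& #|X| == 3,
   [exists j : 'I_T, exists k : 'I_n,
      [&& k \in D j :&: W, k \notin X & X \subset interf j k]] &
   [exists a in X, exists b in X, conflict a b]].

Definition tri_adj : rel {set 'I_n} := fun X Y =>
  [&& triangular X, triangular Y, X != Y &
   [exists a, exists b, (X :&: Y == [set a; b]) && conflict a b]].

Definition type2_msgs (X0 : {set 'I_n}) : {set 'I_n} :=
  \bigcup_(X | triangular X && connect tri_adj X0 X) X.

End IndexCoding.

(* Main.v *)
Require Import Defs.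
From HB Require Import structures.
From mathcomp Require Import all_boot all_order all_algebra all_field.
Set Implicit Arguments. Unset Strict Implicit. Unset Printing Implicit Defensive.
Import GRing.Theory.
Local Open Scope ring_scope.

Section Lin.
Variable F : fieldType.

Definition mxf p m (f : 'I_p -> 'rV[F]_m) : 'M[F]_(p, m) := \matrix_(i < p) f i.

Lemma mxf_row p m (f : 'I_p -> 'rV[F]_m) i : (f i <= mxf f)%MS.
Proof. by rewrite -(rowK f i) row_sub. Qed.

Lemma mxf_sub p m (f : 'I_p -> 'rV[F]_m) (u : 'rV_m) :
  (u <= mxf f)%MS -> exists y : 'I_p -> F, u = \sum_t y t *: f t.
Proof.
move/submxP=> [Dm ->]; exists (fun t => Dm 0 t).
by rewrite mulmx_sum_row; apply: eq_bigr => i _; rewrite rowK.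
Qed.

Lemma mxf_le p m m2 (f : 'I_p -> 'rV[F]_m) (B : 'M_(m2, m)) :
  (forall i, f i <= B)%MS -> (mxf f <= B)%MS.
Proof. by move=> h; apply/row_subP => i; rewrite rowK. Qed.

Lemma rank_chain m m1 m2 (A : 'M[F]_(m1, m)) (B : 'M_(m2, m)) (u : 'rV_m) :
  (A <= B)%MS -> (u <= B)%MS -> ~~ (u <= A)%MS -> (\rank A < \rank B)%N.
Proof.
move=> AB uB uA; have := mxrank_leqif_sup AB; case=> le eq.
rewrite ltn_neqAle le andbT eq; apply/negP => BA.
by move: uA; rewrite (submx_trans uB BA).
Qed.

End Lin.

Lemma sum_pick (F : fieldType) n L (W : {set 'I_n}) (x : 'I_n) (f : 'I_n -> 'rV[F]_L) (c : F) :
  x \in W -> \sum_(i in W) ((x == i)%:R * c) *: f i = c *: f x.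
Proof.
move=> hx; rewrite (bigD1 x) //= eqxx mul1r big1 ?addr0 // => i /andP[_ ne].
by rewrite eq_sym (negbTE ne) mul0r scale0r.
Qed.

Lemma span_bad (F : fieldType) n T (D S : 'I_T -> {set 'I_n}) W L
  (V : 'I_n -> 'rV[F]_L) p (g : 'I_p -> 'I_n) (y : 'I_p -> F) j k :
  (forall j, [disjoint S j & D j]) -> valid_code D S W V -> k \in D j :&: W ->
  (forall t, g t \in W) -> (forall t, g t != k) -> (forall t, g t \notin S j) ->
  V k = \sum_t y t *: V (g t) -> False.
Proof.
move=> hSD hv hk hgW hgk hgS hV.
pose d i := (k == i)%:R * 1 - \sum_t (g t == i)%:R * y t.
have kW : k \in W by move: hk; rewrite inE => /andP[].
have kD : k \in D j by move: hk; rewrite inE => /andP[].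
have := hv j k hk d (fun _ => 0).
have -> : d k = 1.
  rewrite /d eqxx mul1r big1 ?subr0 // => t _.
  by rewrite (negbTE (hgk t)) mul0r.
move=> h; have : (1 : F) = 0; last by move/eqP; rewrite oner_eq0.
apply: h.
  move=> i; rewrite inE => /andP[iS _]; rewrite /d.
  have -> : (k == i) = false.
    apply/negP => /eqP ki; move: (disjointFl (hSD j) kD).
    by rewrite ki iS.
  rewrite mul0r sub0r big1 ?oppr0 // => t _.
  have -> : (g t == i) = false by apply/negP => /eqP gi; move: (hgS t); rewrite gi iS.
  by rewrite mul0r.
rewrite [in RHS]big1; last by move=> i _; rewrite scale0r.
idtac.
rewrite /d.
under eq_bigr => i _ do rewrite scalerBl.
rewrite sumrB sum_pick // scale1r.
under eq_bigr => i _ do rewrite scaler_suml.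
rewrite exchange_big /=.
under eq_bigr => t _ do rewrite sum_pick //.
by rewrite -hV subrr.
Qed.

Lemma connect_ind' (Ty : finType) (e : rel Ty) (P : Ty -> Prop) x y :
  (forall u v, e u v -> P u -> P v) -> P x -> connect e x y -> P y.
Proof.
move=> he px /connectP[p]; elim: p x px => [|z p IH] x px /=; first by move=> _ ->.
by move=> /andP[exz pz] ey; apply: (IH z (he _ _ exz px) pz ey).
Qed.

Section Gen.
Variables (F : fieldType) (n T : nat) (D S : 'I_T -> {set 'I_n}).
Hypothesis hSD : forall j, [disjoint S j & D j].
Hypothesis hdem : forall i : 'I_n, exists j, i \in D j.

Lemma nzV W L (V : 'I_n -> 'rV[F]_L) i : valid_code D S W V -> i \in W -> V i != 0.
Proof.
move=> hv iW; have [j hj] := hdem i; apply/negP => /eqP h0.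
apply: (@span_bad F n T D S W L V 0 (fun _ : 'I_0 => i) (fun _ => 0) j i hSD hv).
- by rewrite inE hj iW.
- by case.
- by case.
- by case.
- by rewrite big_ord0.
Qed.

Lemma notsub W L (V : 'I_n -> 'rV[F]_L) j a b : valid_code D S W V ->
  b \in D j :&: W -> a \in W -> a != b -> a \notin S j -> ~~ (V b <= V a)%MS.
Proof.
move=> hv hb aW ab aS; apply/negP => h.
have h1 : (V b <= mxf (fun _ : 'I_1 => V a))%MS.
  by apply: submx_trans h _; exact: (mxf_row (fun _ : 'I_1 => V a) ord0).
have [y hy] := mxf_sub h1.
by apply: (@span_bad F n T D S W L V 1 (fun _ => a) y j b hSD hv hb).
Qed.

Lemma rank1 W L (V : 'I_n -> 'rV[F]_L) i : valid_code D S W V -> i \in W -> \rank (V i) = 1%N.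
Proof. by move=> hv iW; rewrite rank_rV (nzV hv iW). Qed.

Definition o0 : 'I_3 := @Ordinal 3 0 isT.
Definition o1 : 'I_3 := @Ordinal 3 1 isT.
Definition o2 : 'I_3 := @Ordinal 3 2 isT.
Definition p0 : 'I_2 := @Ordinal 2 0 isT.
Definition p1 : 'I_2 := @Ordinal 2 1 isT.

Definition M2 L (V : 'I_n -> 'rV[F]_L) a b := mxf (fun t : 'I_2 => V (nth a [:: a; b] t)).
Definition M3 L (V : 'I_n -> 'rV[F]_L) a b c := mxf (fun t : 'I_3 => V (nth a [:: a; b; c] t)).

Lemma M2a L (V : 'I_n -> 'rV[F]_L) a b : (V a <= M2 V a b)%MS.
Proof. exact: (mxf_row (fun t : 'I_2 => V (nth a [:: a; b] t)) p0). Qed.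
Lemma M2b L (V : 'I_n -> 'rV[F]_L) a b : (V b <= M2 V a b)%MS.
Proof. exact: (mxf_row (fun t : 'I_2 => V (nth a [:: a; b] t)) p1). Qed.

Lemma M2le L m2 (V : 'I_n -> 'rV[F]_L) a b (B : 'M_(m2, L)) :
  (V a <= B)%MS -> (V b <= B)%MS -> (M2 V a b <= B)%MS.
Proof. by move=> ha hb; apply: mxf_le; case=> [[|[|t]] ht]. Qed.

Lemma conflict_rank (V : 'I_n -> 'rV[F]_3) a b : valid_code D S setT V ->
  conflict D S setT a b -> (1 < \rank (M2 V a b))%N.
Proof.
move=> hv /andP[ab /existsP[j /orP[/andP[hb ha] | /andP[ha hb]]]].
- suff h : ~~ (V b <= V a)%MS.
    by have := rank_chain (M2a V a b) (M2b V a b) h; rewrite (rank1 hv (in_setT a)).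
  idtac.
  move: ha; rewrite /interf hb !inE andbT negb_or => /andP[_ aS].
  by rewrite andbT in aS; apply: notsub hv hb (in_setT a) ab aS.
- suff h : ~~ (V a <= V b)%MS.
    by have := rank_chain (M2b V a b) (M2a V a b) h; rewrite (rank1 hv (in_setT b)).
  idtac.
  move: hb; rewrite /interf ha !inE andbT negb_or => /andP[_ bS].
  by rewrite andbT in bS; apply: notsub hv ha (in_setT b) _ bS; rewrite eq_sym.
Qed.

Lemma Ltri (V : 'I_n -> 'rV[F]_3) (Y : {set 'I_n}) j k a b c :
  valid_code D S setT V -> k \in D j :&: setT -> Y \subset interf D S setT j k ->
  conflict D S setT a b -> a \in Y -> b \in Y -> c \in Y -> (V c <= M2 V a b)%MS.
Proof.
move=> hv hk hY hc aY bY cY; case: (boolP (V c <= M2 V a b)%MS) => // nc.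
exfalso.
have le23 : (M2 V a b <= M3 V a b c)%MS.
  apply: M2le.
    exact: (mxf_row (fun t : 'I_3 => V (nth a [:: a; b; c] t)) o0).
  exact: (mxf_row (fun t : 'I_3 => V (nth a [:: a; b; c] t)) o1).
have c3 : (V c <= M3 V a b c)%MS.
  exact: (mxf_row (fun t : 'I_3 => V (nth a [:: a; b; c] t)) o2).
have r1 := conflict_rank hv hc.
have r2 := rank_chain le23 c3 nc.
have full : row_full (M3 V a b c).
  rewrite /row_full eqn_leq rank_leq_col /=.
  by apply: leq_trans r2; apply: r1.
have [y hy] := mxf_sub (submx_full (V k) full).
have gY : forall t : 'I_3, nth a [:: a; b; c] t \in Y.
  by case=> [[|[|[|t]]] ht].
have gI : forall t : 'I_3, nth a [:: a; b; c] t \in interf D S setT j k.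
  by move=> t; apply: (subsetP hY); apply: gY.
apply: (@span_bad F n T D S setT 3 V 3 (fun t => nth a [:: a; b; c] t) y j k hSD hv hk).
- by move=> t; rewrite in_setT.
- by move=> t; move: (gI t); rewrite /interf hk !inE !andbT negb_or => /andP[].
- by move=> t; move: (gI t); rewrite /interf hk !inE !andbT negb_or => /andP[].
- exact: hy.
Qed.

Lemma edge2 W (V : 'I_n -> 'rV[F]_2) x y j k : valid_code D S W V ->
  x \in W -> y \in W -> k \in D j :&: W -> k != x -> k != y ->
  x \notin S j -> y \notin S j -> (V x <= V y)%MS.
Proof.
move=> hv xW yW hk kx ky xS yS; case: (boolP (V x <= V y)%MS) => // nc; exfalso.
have r := rank_chain (M2a V y x) (M2b V y x) nc.
rewrite (rank1 hv yW) in r.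
have full : row_full (M2 V y x) by rewrite /row_full eqn_leq rank_leq_col r.
have [z hz] := mxf_sub (submx_full (V k) full).
apply: (@span_bad F n T D S W 2 V 2 (fun t => nth y [:: y; x] t) z j k hSD hv hk).
- by case=> [[|[|t]] ht].
- by case=> [[|[|t]] ht] //=; rewrite eq_sym.
- by case=> [[|[|t]] ht].
- exact: hz.
Qed.

End Gen.

Theorem theorem6 (F : finFieldType) (n T : nat) (D S : 'I_T -> {set 'I_n})
  (hSD : forall j, [disjoint S j & D j])
  (hdem : forall i : 'I_n, exists j, i \in D j)
  (hcode : exists V : 'I_n -> 'rV[F]_3, valid_code D S setT V) :
  forall X0 : {set 'I_n}, triangular D S setT X0 ->
    let W' := type2_msgs D S setT X0 in
    (exists V : 'I_n -> 'rV[F]_2, valid_code D S W' V) /\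
    ~ has_internal_conflict D S W'.
Proof.
move=> X0 hX0 W'.
have [V hv] := hcode.
have tri_info : forall Y, triangular D S setT Y -> exists j k,
    k \in D j :&: setT /\ Y \subset interf D S setT j k.
  move=> Y /and3P[_ /existsP[j /existsP[k /and3P[hk _ hY]]] _].
  by exists j, k.
have [a0 [b0 [a0X [b0X c0]]]] : exists a0 b0, [/\ a0 \in X0, b0 \in X0 & conflict D S setT a0 b0].
  move: hX0 => /and3P[_ _ /existsP[a /andP[aX /existsP[b /andP[bX cab]]]]].
  by exists a, b.
pose A := M2 V a0 b0.
have PX : forall Y, connect (tri_adj D S setT) X0 Y -> forall c, c \in Y -> (V c <= A)%MS.
  move=> Y0 hc; apply: (@connect_ind' _ (tri_adj D S setT) (fun Y => forall c, c \in Y -> (V c <= A)%MS) X0 Y0 _ _ hc).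
    move=> X Y /and4P[_ tY _ /existsP[a /existsP[b /andP[/eqP hXY cab]]]] PXX c cY.
    have [j [k [hk hY]]] := tri_info Y tY.
    have aXY : a \in X :&: Y by rewrite hXY !inE eqxx.
    have bXY : b \in X :&: Y by rewrite hXY !inE eqxx orbT.
    move: aXY bXY; rewrite !inE => /andP[aX aY] /andP[bX bY].
    apply: submx_trans (Ltri hSD hdem hv hk hY cab aY bY cY) _.
    by apply: M2le; apply: PXX.
  move=> c cX.
  have [j [k [hk hY]]] := tri_info X0 hX0.
  exact: (Ltri hSD hdem hv hk hY c0 a0X b0X cX).
have VA : forall i, i \in W' -> (V i <= A)%MS.
  move=> i /bigcupP[X /andP[_ cX] iX]; exact: PX cX i iX.
pose V' i := V i *m pinvmx A.
have hv' : valid_code D S W' V'.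
  move=> j k hk w w' hww hsum.
  have hk' : k \in D j :&: setT by move: hk; rewrite !inE => /andP[->].
  have kW : k \in W' by move: hk; rewrite inE => /andP[].
  pose u i := if i \in W' then w i else 0.
  pose u' i := if i \in W' then w' i else 0.
  have := hv j k hk' u u'.
  rewrite /u /u' kW; apply.
    move=> i; rewrite !inE andbT => iS; case: ifP => // iW.
    by apply: hww; rewrite inE iS iW.
  have ex : forall (z : 'I_n -> F), \sum_(i in setT) (if i \in W' then z i else 0) *: V i
      = (\sum_(i in W') z i *: V' i) *m A.
    move=> z; rewrite mulmx_suml [RHS]big_mkcond /=.
    apply: eq_big => [i|i _]; first by rewrite in_setT.
    case: ifP => iW; last by rewrite scale0r.
    by rewrite -scalemxAl /V' mulmxKpV // VA.
  by rewrite !ex hsum.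
split; first by exists V'.
move=> [a [b [/andP[ab /existsP[j hj]] /and3P[aW bW cab]]]].
have P : forall z, connect (align_adj D S W') a z ->
    (V' a <= V' z)%MS && (V' z <= V' a)%MS.
  move=> z hc; apply: (@connect_ind' _ (align_adj D S W') (fun z => (V' a <= V' z)%MS && (V' z <= V' a)%MS) a z _ _ hc); last by rewrite !submx_refl.
  move=> x y /and4P[xW yW _ /existsP[j' /existsP[k /and5P[hk kx ky xS yS]]]] /andP[h1 h2].
  have e1 := edge2 hSD hdem hv' xW yW hk kx ky xS yS.
  have e2 := edge2 hSD hdem hv' yW xW hk ky kx yS xS.
  by rewrite (submx_trans h1 e1) (submx_trans e2 h2).
have /andP[s1 s2] := P b cab.
case/orP: hj => /andP[hb ha].
- move: ha; rewrite /interf hb !inE negb_or => /andP[/andP[_ aS] _].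
  move: aS; rewrite aW andbT => aS.
  by move: (notsub hSD hv' hb aW ab aS); rewrite s2.
- move: ha; rewrite /interf hb !inE negb_or => /andP[/andP[_ bS] _].
  move: bS; rewrite bW andbT => bS.
  have ba : b != a by rewrite eq_sym.
  by move: (notsub hSD hv' hb bW ba bS); rewrite s1.
Qed.
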